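(* Let $C$ be a hyperelliptic curve of genus $3$ over $\mathbb{C}$ given by $y^2=f(x)$ with $f$ a separable polynomial of degree $8$. Let $w\in\mathbb{C}$ with $f(w)\neq0$ and let $P_m^w$ ($m\in\{1,2\}$) be one of the two points of $C$ over $x=w$. Let $f_{w,4,m}(x)$ be the degree-$4$ Taylor polynomial at $x=w$ of the local branch of $y$ (as a function of $x$) through $P_m^w$. Then the $2$-gap sequence of $P_m^w$ is $\{1,2,3,4,5,n_6\}$ with $n_6=v_{P_m^w}(y-f_{w,4,m}(x))+1$. Consequently, if $n_6>6$, then $P_m^w$ is a $2$-Weierstrass point with $2$-weight $n_6-6$.
   Context: $v_P$ denotes the order of vanishing (valuation) at the point $P$. For a point $P$ on a smooth projective curve $C$ of genus $g$ and $q\ge1$, let $d_q=\dim H^0(C,(\Omega^1)^q)$ (holomorphic $q$-differentials; $d_q=(g-1)(2q-1)$ for $q\ge2$, so $d_2=6$ for $g=3$). Choose a basis $\psi_1,\dots,\psi_{d_q}$ with strictly increasing orders of vanishing at $P$ and set $n_i=\mathrm{ord}_P(\psi_i)+1$; $\{n_1,\dots,n_{d_q}\}$ is the $q$-gap sequence of $P$, $w^{(q)}(P)=\sum_i(n_i-i)$ is its $q$-weight, and $P$ is a $q$-Weierstrass point if $w^{(q)}(P)>0$. *)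

(* Defs.v *)
(* Concrete, algebraic model of the hyperelliptic curve
   y^2 = f(x) (deg f = 8) over an algebraically closed field F of char 0
   (numClosedFieldType, e.g. algC or complex R), via local expansions
   (formal Laurent series) at every point of the smooth projective model. *)
From HB Require Import structures.
From mathcomp Require Import all_boot all_order all_algebra all_field.
Set Implicit Arguments. Unset Strict Implicit. Unset Printing Implicit Defensive.
Import Order.TTheory GRing.Theory Num.Theory.
Local Open Scope ring_scope.

Section Hyper.
Variable F : numClosedFieldType.

(* formal power series: coefficient functions *)
Definition ser := nat -> F.
Definition smul (s1 s2 : ser) : ser := fun n => \sum_(i < n.+1) s1 i * s2 (n - i)%N.

(* formal Laurent series  t^lsh * lco(t) *)
Record lser := LS { lsh : int; lco : ser }.

Definition lcoef (a : lser) (z : int) : F :=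
  if lsh a <= z then lco a `|z - lsh a|%N else 0.
Definition lmul (a b : lser) : lser := LS (lsh a + lsh b) (smul (lco a) (lco b)).
Definition ladd (a b : lser) : lser :=
  let m := if lsh a <= lsh b then lsh a else lsh b in
  LS m (fun n => lcoef a (m + n%:Z) + lcoef b (m + n%:Z)).
Definition lconst (c : F) : lser := LS 0 (fun n => if n == 0%N then c else 0).
Definition lpow (a : lser) (n : nat) : lser := iter n (lmul a) (lconst 1).
Definition leval (p : {poly F}) (X : lser) : lser :=
  \big[ladd/lconst 0]_(i < size p) lmul (lconst p`_i) (lpow X i).

Definition lorder (a : lser) (z : int) : Prop :=
  lcoef a z != 0 /\ forall z', z' < z -> lcoef a z' = 0.

(* the power series square root s of g with s(0) = c (c^2 = g 0 <> 0) *)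
Fixpoint sqs_seq (g : ser) (c : F) (n : nat) : seq F :=
  match n with
  | 0 => [::]
  | n'.+1 => let s := sqs_seq g c n' in
      rcons s (if n' is 0 then c
               else (g n' - \sum_(1 <= i < n') s`_i * s`_(n' - i)) / (c *+ 2))
  end.
Definition sqs (g : ser) (c : F) : ser := fun n => (sqs_seq g c n.+1)`_n.

(* points of the smooth projective model of y^2 = f(x), deg f = 8:
   affine points (a,b), and the two points at infinity, labelled by the
   value c of y/x^4 there (c^2 = lead_coef f) *)
Inductive hpoint := Aff of F & F | Inf of F.

Definition on_curve (f : {poly F}) (P : hpoint) : Prop :=
  match P with
  | Aff a b => b ^+ 2 = f.[a]
  | Inf c => c ^+ 2 = lead_coef f
  end.

Definition coefs (p : {poly F}) : ser := fun n => p`_n.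

(* local expansions (x(t), y(t), dx/dt) in a local parameter t at P *)
Definition xs (P : hpoint) : lser :=
  match P with
  | Aff a b => if b != 0 then LS 0 (coefs (a%:P + 'X))
               else LS 0 (coefs (a%:P + 'X ^+ 2))
  | Inf c => LS (-1) (coefs 1)
  end.

Definition ys (f : {poly F}) (P : hpoint) : lser :=
  match P with
  | Aff a b =>
      if b != 0 then LS 0 (sqs (coefs (f \Po ('X + a%:P))) b)
      else let h := f %/ ('X - a%:P) in
           LS 1 (sqs (fun n => if odd n then 0 else (h \Po ('X + a%:P))`_n./2)
                     (sqrtC h.[a]))
  | Inf c => LS (-4) (sqs (fun n => if (n <= 8)%N then f`_(8 - n) else 0) c)
  end.

Definition dxs (P : hpoint) : lser :=
  match P with
  | Aff a b => if b != 0 then lconst 1 else LS 1 (coefs 2%:P)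
  | Inf c => LS (-2) (coefs (-1))
  end.

(* element (P0 + P1 y) / Q of the function field F(x)[y]/(y^2 - f) *)
Record rfun := RF { rP0 : {poly F}; rP1 : {poly F}; rQ : {poly F} }.

Definition rfun_nonzero (h : rfun) : Prop := rQ h != 0 /\ (rP0 h != 0 \/ rP1 h != 0).

Definition qnum (f : {poly F}) (q : nat) (h : rfun) (P : hpoint) : lser :=
  lmul (ladd (leval (rP0 h) (xs P)) (lmul (leval (rP1 h) (xs P)) (ys f P)))
       (lpow (dxs P) q).
Definition qden (h : rfun) (P : hpoint) : lser := leval (rQ h) (xs P).

(* ord_P (h dx^q) = z  (for q = 0 this is the valuation v_P(h)) *)
Definition qord (f : {poly F}) (q : nat) (h : rfun) (P : hpoint) (z : int) : Prop :=
  exists zn zd, [/\ lorder (qnum f q h P) zn, lorder (qden h P) zd & z = zn - zd].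

Definition holo_qdiff (f : {poly F}) (q : nat) (h : rfun) : Prop :=
  rQ h != 0 /\
  forall P, on_curve f P -> forall z, qord f q h P z -> 0 <= z.

(* n belongs to the q-gap sequence of P: n = ord_P(psi) + 1 for some nonzero
   holomorphic q-differential psi (the set of these orders is exactly the set of
   orders of a basis with strictly increasing orders) *)
Definition in_qgap (f : {poly F}) (q : nat) (P : hpoint) (n : nat) : Prop :=
  exists h, [/\ rfun_nonzero h, holo_qdiff f q h & qord f q h P (n%:Z - 1)].

(* q-weight of a gap sequence listed increasingly n_1 < ... < n_d *)
Definition qweight (s : seq nat) : nat := (\sum_(i < size s) (nth 0 s i - i.+1))%N.

(* degree-4 Taylor polynomial at x = w of the branch y(x) through (w,b), b <> 0 *)
Definition taylor4 (f : {poly F}) (w b : F) : {poly F} :=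
  \sum_(k < 5) sqs (coefs (f \Po ('X + w%:P))) b k *: ('X - w%:P) ^+ k.

End Hyper.

(* Main.v *)
Require Import Defs.
From HB Require Import structures.
From mathcomp Require Import all_boot all_order all_algebra all_field.
From mathcomp Require Import zify ring.
From Stdlib Require Import Classical.
Set Implicit Arguments. Unset Strict Implicit. Unset Printing Implicit Defensive.
Import Order.TTheory GRing.Theory Num.Theory.
Local Open Scope ring_scope.

Section Ser.
Variable F : numClosedFieldType.
Implicit Types u v w : ser F.

Definition tr N (u : ser F) : {poly F} := \poly_(i < N) u i.
Definition sV m (u : ser F) := forall n, (n < m)%N -> u n = 0.
Definition sord (u : ser F) k := u k != 0 /\ sV k u.
Definition sadd u v : ser F := fun n => u n + v n.
Definition sopp u : ser F := fun n => - u n.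
Definition sscal (c : F) u : ser F := fun n => c * u n.

Lemma smul_poly u v (p q : {poly F}) n :
  (forall i, (i <= n)%N -> u i = p`_i) -> (forall i, (i <= n)%N -> v i = q`_i) ->
  smul u v n = (p * q)`_n.
Proof.
move=> hu hv; rewrite /smul coefM; apply: eq_bigr => i _.
have hi : (i <= n)%N by rewrite -ltnS.
by rewrite hu // hv // leq_subr.
Qed.

Lemma tr_coef N u i : (i < N)%N -> u i = (tr N u)`_i.
Proof. by move=> h; rewrite /tr coef_poly h. Qed.

Lemma smulC u v n : smul u v n = smul v u n.
Proof.
have hu : forall i, (i <= n)%N -> u i = (tr n.+1 u)`_i by move=> i hi; apply: tr_coef.
have hv : forall i, (i <= n)%N -> v i = (tr n.+1 v)`_i by move=> i hi; apply: tr_coef.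
by rewrite (smul_poly hu hv) (smul_poly hv hu) mulrC.
Qed.

Lemma smulA u v w n : smul (smul u v) w n = smul u (smul v w) n.
Proof.
have hu : forall i, (i <= n)%N -> u i = (tr n.+1 u)`_i by move=> i hi; apply: tr_coef.
have hv : forall i, (i <= n)%N -> v i = (tr n.+1 v)`_i by move=> i hi; apply: tr_coef.
have hw : forall i, (i <= n)%N -> w i = (tr n.+1 w)`_i by move=> i hi; apply: tr_coef.
rewrite (@smul_poly _ _ (tr n.+1 u * tr n.+1 v) (tr n.+1 w)) //; last first.
  move=> i hi; apply: smul_poly => j hj.
    by apply: hu; apply: leq_trans hj hi.
  by apply: hv; apply: leq_trans hj hi.
rewrite (@smul_poly _ _ (tr n.+1 u) (tr n.+1 v * tr n.+1 w)) ?mulrA //.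
move=> i hi; apply: smul_poly => j hj.
  by apply: hv; apply: leq_trans hj hi.
by apply: hw; apply: leq_trans hj hi.
Qed.

Lemma smulDl u v w n : smul (sadd u v) w n = smul u w n + smul v w n.
Proof. by rewrite /smul -big_split; apply: eq_bigr => i _; rewrite mulrDl. Qed.

Lemma smulNl u w n : smul (sopp u) w n = - smul u w n.
Proof. by rewrite /smul -sumrN; apply: eq_bigr => i _; rewrite mulNr. Qed.

Lemma smulZl c u w n : smul (sscal c u) w n = c * smul u w n.
Proof. by rewrite /smul mulr_sumr; apply: eq_bigr => i _; rewrite mulrA. Qed.

Lemma smul_ext u u' v v' n : (forall i, (i <= n)%N -> u i = u' i) ->
  (forall i, (i <= n)%N -> v i = v' i) -> smul u v n = smul u' v' n.
Proof.
move=> hu hv; apply: eq_bigr => i _.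
have hi : (i <= n)%N by rewrite -ltnS.
by rewrite hu // hv // leq_subr.
Qed.

Lemma smul_coefs (p q : {poly F}) n : smul (coefs p) (coefs q) n = (p * q)`_n.
Proof. exact: smul_poly. Qed.

Lemma sV_mul u v k m : sV k u -> sV m v -> sV (k + m)%N (smul u v).
Proof.
move=> hu hv n hn; rewrite /smul big1 // => i _.
have [hik|hik] := ltnP i k; first by rewrite hu ?mul0r.
rewrite hv ?mulr0 //; have := ltn_ord i; lia.
Qed.

Lemma smul_at u v k m : sV k u -> sV m v -> smul u v (k + m)%N = u k * v m.
Proof.
move=> hu hv; rewrite /smul (bigD1 (Ordinal (ltn_addr m (ltnSn k)))) //=.
rewrite addKn big1 ?addr0 // => i /eqP hi.
have [hik|hik] := ltnP i k; first by rewrite hu ?mul0r.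
rewrite hv ?mulr0 //.
have hne : nat_of_ord i != k by apply/eqP=> e; apply: hi; apply: val_inj.
have gen : forall j : nat, j != k -> (k <= j)%N -> (j < k.+1 + m)%N -> (k + m - j < m)%N by move=> j; lia.
exact: gen (ltn_ord i).
Qed.

Lemma sord_mul u v k m : sord u k -> sord v m -> sord (smul u v) (k + m)%N.
Proof.
move=> [h1 h2] [h3 h4]; split; last exact: sV_mul.
by rewrite smul_at // mulf_neq0.
Qed.

Lemma sord_uniq u k m : sord u k -> sord u m -> k = m.
Proof.
move=> [h1 h2] [h3 h4].
have [hkm|hkm|->] := ltngtP k m; last by [].
  by move: h1; rewrite h4 // eqxx.
by move: h3; rewrite h2 // eqxx.
Qed.

Lemma exists_sord u n : u n != 0 -> exists k, (k <= n)%N /\ sord u k.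
Proof.
move=> hn; have ex : exists n, u n != 0 by exists n.
case: (ex_minnP ex) => k hk hmin; exists k; split; first exact: hmin.
split=> // j hj; apply/eqP; apply: contraTT hj => hj; rewrite -leqNgt; exact: hmin.
Qed.

Lemma not_sV u m : ~ sV m u -> exists k, (k < m)%N /\ sord u k.
Proof.
move=> h.
have [n hn] : exists n : 'I_m, u n != 0.
  case: (boolP [exists n : 'I_m, u n != 0]) => [/existsP //|/existsPn hall].
  exfalso; apply: h => n hn.
  by have := hall (Ordinal hn); rewrite negbK => /eqP.
have [k [hk ho]] := exists_sord hn; exists k; split=> //.
exact: leq_ltn_trans hk (ltn_ord n).
Qed.

Lemma sV_unit u v m : sV m (smul u v) -> v 0%N != 0 -> sV m u.
Proof.
move=> h hv n hn; apply/eqP; apply/negPn/negP => hne.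
have [k [hk ho]] := exists_sord hne.
have hv0 : sord v 0 by split.
have := sord_mul ho hv0; rewrite addn0 => -[hne' _].
by move: hne'; rewrite h ?eqxx //; apply: leq_ltn_trans hk hn.
Qed.
End Ser.

Section L.
Variable F : numClosedFieldType.
Implicit Types a b : lser F.

Definition lV a (s : int) := forall z, z < s -> lcoef a z = 0.
Definition RR (s : int) (u : ser F) a := lV a s /\ forall n : nat, lcoef a (s + n%:Z) = u n.

Lemma lcoef_low a z : z < lsh a -> lcoef a z = 0.
Proof. by move=> h; rewrite /lcoef; case: ifP => // h'; exfalso; lia. Qed.

Lemma lcoef_sh a (n : nat) : lcoef a (lsh a + n%:Z) = lco a n.
Proof. rewrite /lcoef ifT; last by lia. by congr (lco a _); lia. Qed.

Lemma RR_LS a : RR (lsh a) (lco a) a.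
Proof. by split; [move=> z; apply: lcoef_low | apply: lcoef_sh]. Qed.

Lemma RR_ext s u v a : RR s u a -> (forall n, u n = v n) -> RR s v a.
Proof. by move=> [h1 h2] e; split=> // n; rewrite h2. Qed.

Lemma lcoef_ladd a b z : lcoef (ladd a b) z = lcoef a z + lcoef b z.
Proof.
rewrite {1}/lcoef /ladd /=.
set m := (if lsh a <= lsh b then lsh a else lsh b).
have [hma hmb] : m <= lsh a /\ m <= lsh b by rewrite /m; case: ifP => h; lia.
case: ifP => h.
  by have -> : m + (`|z - m|%N)%:Z = z by lia.
rewrite !lcoef_low ?addr0 //; lia.
Qed.

Lemma RR_add s u v a b : RR s u a -> RR s v b -> RR s (sadd u v) (ladd a b).
Proof.
move=> [h1 h2] [h3 h4]; split.
  by move=> z hz; rewrite lcoef_ladd h1 // h3 // addr0.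
by move=> n; rewrite lcoef_ladd h2 h4.
Qed.

Lemma lcoef_lconst (c : F) z : lcoef (lconst c) z = if z == 0 then c else 0.
Proof.
rewrite /lcoef /lconst /=; case: ifP => h.
  have -> : (`|z - 0|%N == 0%N) = (z == 0) by apply/eqP/eqP; lia.
  by [].
by have -> : (z == 0) = false by apply/eqP; lia.
Qed.

Lemma RR_const (c : F) : RR 0 (coefs c%:P) (lconst c).
Proof.
split=> [z hz|n]; rewrite lcoef_lconst.
  by have -> : (z == 0) = false by apply/eqP; lia.
rewrite /coefs coefC add0r.
by case: n.
Qed.

Definition conv (A B : int -> F) (L : int) (K : nat) (z : int) :=
  \sum_(i < K) A (L + i%:Z) * B (z - L - i%:Z).

Lemma conv_low A B L K z d : (forall z', z' < L -> A z' = 0) ->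
  conv A B (L - d%:Z) (K + d) z = conv A B L K z.
Proof.
move=> hA; elim: d => [|d IH]; first by rewrite subr0 addn0.
rewrite -IH addnS /conv big_ord_recl /=.
rewrite hA ?mul0r ?add0r; last by lia.
apply: eq_bigr => i _; congr (A _ * B _); rewrite /bump /=; lia.
Qed.

Lemma conv_high A B L M K z : (forall z', z' < M -> B z' = 0) -> z - L - M < K%:Z ->
  forall d, conv A B L (K + d) z = conv A B L K z.
Proof.
move=> hB hz; elim=> [|d IH]; first by rewrite addn0.
rewrite addnS /conv big_ord_recr /= -/(conv A B L (K + d) z) IH.
by rewrite hB ?mulr0 ?addr0 //; lia.
Qed.

Lemma lmul_conv a b z K : z - lsh a - lsh b < K%:Z ->
  lcoef (lmul a b) z = conv (lcoef a) (lcoef b) (lsh a) K z.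
Proof.
move=> hK.
have hB : forall z', z' < lsh b -> lcoef b z' = 0 by move=> z'; apply: lcoef_low.
case h: (lsh a + lsh b <= z).
  set k := absz (z - (lsh a + lsh b))%R.
  have -> : K = (k.+1 + (K - k.+1))%N by rewrite /k; lia.
  rewrite (conv_high _ hB); last by rewrite /k; lia.
  have -> : lcoef (lmul a b) z = smul (lco a) (lco b) k by rewrite /lcoef /= h.
  rewrite /smul /conv; apply: eq_bigr => i _; rewrite -!lcoef_sh.
  congr (lcoef a _ * lcoef b _); have := ltn_ord i; rewrite /k; lia.
have h' : z < lsh a + lsh b by rewrite ltNge h.
rewrite lcoef_low; last by rewrite /=; lia.
have -> : K = (0 + K)%N by [].
rewrite (conv_high _ hB); last by lia.
by rewrite /conv big_ord0.
Qed.

Lemma lmul_conv_s a b s1 z : lV a s1 ->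
  exists K0, forall d, lcoef (lmul a b) z = conv (lcoef a) (lcoef b) s1 (K0 + d) z.
Proof.
move=> hA.
have hA' : forall z', z' < lsh a -> lcoef a z' = 0 by move=> z'; apply: lcoef_low.
set k1 := absz (z - lsh a - lsh b)%R.
case h: (lsh a <= s1).
  set e := absz (s1 - lsh a)%R.
  exists k1.+1 => d.
  rewrite (@lmul_conv _ _ _ (k1.+1 + d + e)%N); last by rewrite /k1; lia.
  have -> : lsh a = s1 - e%:Z by rewrite /e; lia.
  by rewrite conv_low.
set e := absz (lsh a - s1)%R.
have h' : s1 < lsh a by rewrite ltNge h.
exists (k1.+1 + e)%N => d.
rewrite (@lmul_conv _ _ _ (k1.+1 + d)%N); last by rewrite /k1; lia.
have -> : (k1.+1 + e + d = k1.+1 + d + e)%N by lia.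
have ee : s1 = lsh a - e%:Z by rewrite /e; lia.
by rewrite ee conv_low.
Qed.

Lemma RR_mul s1 s2 u v a b : RR s1 u a -> RR s2 v b -> RR (s1 + s2) (smul u v) (lmul a b).
Proof.
move=> [h1 h2] [h3 h4]; split.
  move=> z hz; have [K0 hK] := lmul_conv_s b z h1.
  rewrite (hK 0%N) /conv big1 // => i _; rewrite h3 ?mulr0 //; lia.
move=> n; have [K0 hK] := lmul_conv_s b (s1 + s2 + n%:Z) h1.
rewrite (hK n.+1) addnC (conv_high _ h3) //; last by lia.
rewrite /conv /smul; apply: eq_bigr => i _.
rewrite -h2 -h4; congr (lcoef a _ * lcoef b _).
have := ltn_ord i; lia.
Qed.

End L.

Section L3.
Variable F : numClosedFieldType.
Implicit Types a b : lser F.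

Lemma RR_lorder s u a k : RR s u a -> sord u k -> lorder a (s + k%:Z).
Proof.
move=> [h1 h2] [h3 h4]; split; first by rewrite h2.
move=> z hz; case: (ltP z s) => hzs; first exact: h1.
have -> : z = s + (absz (z - s)%R)%:Z by lia.
rewrite h2 h4 //; lia.
Qed.

Lemma lorder_uniq a z1 z2 : lorder a z1 -> lorder a z2 -> z1 = z2.
Proof.
move=> [h1 h2] [h3 h4].
case: (ltgtP z1 z2) => // h.
  by move: h1; rewrite h4 // eqxx.
by move: h3; rewrite h2 // eqxx.
Qed.

Lemma RR_lorder_inv s u a z : RR s u a -> lorder a z -> exists k, z = s + k%:Z /\ sord u k.
Proof.
move=> [h1 h2] [h3 h4].
case: (ltP z s) => hzs; first by move: h3; rewrite h1 // eqxx.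
exists (absz (z - s)%R); split; first by lia.
split; first by rewrite -h2; have -> : s + (absz (z - s)%R)%:Z = z by lia.
move=> n hn; rewrite -h2 h4 //; lia.
Qed.

Lemma RR_shift s s' u a : s = s' -> RR s u a -> RR s' u a.
Proof. by move=> ->. Qed.

Lemma RR_low s u a m : RR s u a ->
  RR (s - m%:Z) (fun n => if (n < m)%N then 0 else u (n - m)%N) a.
Proof.
move=> [h1 h2]; split.
  by move=> z hz; apply: h1; lia.
move=> n; case: ifP => h.
  by apply: h1; lia.
rewrite -h2; congr (lcoef a _); lia.
Qed.

Lemma RR_lowP s (p : {poly F}) a m : RR s (coefs p) a ->
  RR (s - m%:Z) (coefs ('X^m * p)) a.
Proof.
move=> h; apply: RR_ext (RR_low m h) _ => n.
by rewrite /coefs coefXnM.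
Qed.

Lemma RR_mulP s1 s2 (p q : {poly F}) a b : RR s1 (coefs p) a -> RR s2 (coefs q) b ->
  RR (s1 + s2) (coefs (p * q)) (lmul a b).
Proof.
move=> h1 h2; apply: RR_ext (RR_mul h1 h2) _ => n.
by rewrite smul_coefs.
Qed.

Lemma RR_addP s (p q : {poly F}) a b : RR s (coefs p) a -> RR s (coefs q) b ->
  RR s (coefs (p + q)) (ladd a b).
Proof.
move=> h1 h2; apply: RR_ext (RR_add h1 h2) _ => n.
by rewrite /sadd /coefs coefD.
Qed.

Lemma RR_powP s (p : {poly F}) a n : RR s (coefs p) a ->
  RR (s * n%:Z) (coefs (p ^+ n)) (lpow a n).
Proof.
move=> h; elim: n => [|n IH].
  by rewrite mulr0 expr0; apply: RR_const.
rewrite /lpow iterS -/(lpow a n) exprS.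
apply: RR_shift (RR_mulP h IH); lia.
Qed.

Lemma RR_leval0 (P q : {poly F}) X : RR 0 (coefs q) X ->
  RR 0 (coefs (P \Po q)) (leval P X).
Proof.
move=> hX; rewrite comp_polyE /leval.
apply: (big_rec2 (fun x y => RR 0 (coefs y) x)).
  by apply: RR_ext (RR_const 0) _ => n; rewrite polyC0.
move=> i y1 y2 _ h; apply: RR_addP => //.
have := RR_mulP (RR_const P`_i) (RR_powP i hX).
by rewrite mul0r add0r mul_polyC.
Qed.

Definition revD (D : nat) (P : {poly F}) : {poly F} :=
  \sum_(i < size P) P`_i *: 'X^(D - i).

Lemma RR_leval_inf (P : {poly F}) (D : nat) : (size P <= D.+1)%N ->
  RR (- D%:Z) (coefs (revD D P)) (leval P (LS (-1) (coefs 1))).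
Proof.
move=> hD; rewrite /revD /leval.
apply: (big_rec2 (fun x y => RR (- D%:Z) (coefs y) x)).
  have := RR_lowP D (RR_const 0); rewrite polyC0 mulr0 sub0r; exact.
move=> i y1 y2 _ h; apply: RR_addP => //.
have hX : RR (-1) (coefs 1) (LS (-1) (coefs (1 : {poly F}))) by apply: RR_LS.
have := RR_lowP (D - i) (RR_mulP (RR_const P`_i) (RR_powP i hX)).
rewrite expr1n mulr1 [_ * _%:P]mulrC mul_polyC => h2.
apply: RR_shift h2; have := ltn_ord i; lia.
Qed.

End L3.

Section Sq.
Variable F : numClosedFieldType.
Implicit Types g : ser F.

Lemma size_sqs_seq g c m : size (sqs_seq g c m) = m.
Proof. by elim: m => //= m IH; rewrite size_rcons IH. Qed.

Lemma sqs_seq_nth g c m i : (i < m)%N -> (sqs_seq g c m)`_i = sqs g c i.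
Proof.
elim: m => // m IH hi.
have [->|hne] := eqVneq i m; first by [].
have him : (i < m)%N by rewrite ltn_neqAle hne -ltnS.
by rewrite /= nth_rcons size_sqs_seq him IH.
Qed.

Lemma sqs0 g c : sqs g c 0 = c.
Proof. by []. Qed.

Lemma sqs_rec g c n : sqs g c n.+1 =
  (g n.+1 - \sum_(i < n) sqs g c i.+1 * sqs g c (n - i)%N) / (c *+ 2).
Proof.
rewrite {1}/sqs.
have -> : sqs_seq g c n.+2 = rcons (sqs_seq g c n.+1) ((g n.+1 -
   \sum_(1 <= i < n.+1) (sqs_seq g c n.+1)`_i * (sqs_seq g c n.+1)`_(n.+1 - i)) / (c *+ 2)) by [].
rewrite nth_rcons size_sqs_seq ltnn eqxx; congr ((_ - _) / _).
rewrite big_add1 succnK big_mkord; apply: eq_bigr => i _.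
have hi := ltn_ord i.
rewrite subSS !sqs_seq_nth //; lia.
Qed.

Lemma sqs_sq g c n : c ^+ 2 = g 0%N -> c != 0 -> smul (sqs g c) (sqs g c) n = g n.
Proof.
move=> hc hc0; case: n => [|n].
  by rewrite /smul big_ord1 subn0 sqs0 -expr2.
have h2c : c *+ 2 != 0 by rewrite mulrn_eq0 negb_or hc0.
rewrite /smul big_ord_recl big_ord_recr /= !subn0 subnn sqs0.
rewrite (eq_bigr (fun i : 'I_n => sqs g c i.+1 * sqs g c (n - i)%N)); last first.
  by move=> i _; rewrite /bump /= add1n subSS.
rewrite /bump /= add1n sqs_rec.
set S := \sum_(i < n) _.
have -> : c * ((g n.+1 - S) / (c *+ 2)) + (S + (g n.+1 - S) / (c *+ 2) * c) =
  (c *+ 2) * ((g n.+1 - S) / (c *+ 2)) + S by rewrite mulr2n; ring.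
by rewrite mulrC divfK // subrK.
Qed.

Lemma sqs_opp g c n : sqs g (- c) n = - sqs g c n.
Proof.
elim/ltn_ind: n => -[|n] IH; first by rewrite !sqs0.
rewrite !sqs_rec.
have -> : \sum_(i < n) sqs g (- c) i.+1 * sqs g (- c) (n - i)%N =
    \sum_(i < n) sqs g c i.+1 * sqs g c (n - i)%N.
  apply: eq_bigr => i _; rewrite !IH ?mulrNN //; have := ltn_ord i; lia.
by rewrite mulNrn invrN mulrN.
Qed.

Lemma sqs_odd g c n : (forall k, odd k -> g k = 0) -> odd n -> sqs g c n = 0.
Proof.
move=> hg; elim/ltn_ind: n => -[|n] IH //= hn.
rewrite sqs_rec hg //= big1 ?subr0 ?mul0r // => i _.
have hi := ltn_ord i.
case: (boolP (odd i.+1)) => ho.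
  by rewrite IH ?mul0r.
rewrite (IH (n - i)%N) ?mulr0 //; first by lia.
move: hn ho; rewrite /= oddB; last by lia.
by case: (odd n); case: (odd i).
Qed.

End Sq.

Section P5.
Variable F : numClosedFieldType.
Implicit Types P Q R : {poly F}.

Lemma comp_exp P q k : (P ^+ k) \Po q = (P \Po q) ^+ k.
Proof. by elim: k => [|k IH]; rewrite ?expr0 ?comp_polyC // !exprS comp_polyM IH. Qed.

Lemma XsubC_shift (a : F) : ('X - a%:P) \Po ('X + a%:P) = 'X.
Proof. by rewrite comp_polyB comp_polyX comp_polyC addrK. Qed.

Lemma XaddC_shift (a : F) : ('X + a%:P) \Po ('X - a%:P) = 'X.
Proof. by rewrite comp_polyD comp_polyX comp_polyC subrK. Qed.

Lemma dvd_sV (a : F) P k :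
  (('X - a%:P) ^+ k %| P) = [forall i : 'I_k, (P \Po ('X + a%:P))`_i == 0].
Proof.
apply/idP/idP.
  case/dvdpP => S ->; apply/forallP => i.
  by rewrite comp_polyM comp_exp XsubC_shift coefMXn ltn_ord.
move/forallP => h.
set P' := P \Po ('X + a%:P).
have ht : take_poly k P' = 0.
  apply/polyP => i; rewrite coef_take_poly coef0; case: ifP => // hi.
  exact/eqP/(h (Ordinal hi)).
have e : P = (drop_poly k P' \Po ('X - a%:P)) * ('X - a%:P) ^+ k.
  rewrite -{1}(comp_polyXaddC_K P a) -/P' -{1}(poly_take_drop k P') ht add0r.
  by rewrite comp_polyM comp_Xn_poly.
by rewrite e dvdp_mull.
Qed.

Lemma dvd_sV2 (a : F) P k :
  (('X - a%:P) ^+ k %| P) <-> (forall i, (i < k)%N -> (P \Po ('X + a%:P))`_i = 0).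
Proof.
rewrite dvd_sV; split.
  by move/forallP => h i hi; apply/eqP; apply: (h (Ordinal hi)).
by move=> h; apply/forallP => i; apply/eqP/h.
Qed.

Lemma coef0_shift (a : F) P : (P \Po ('X + a%:P))`_0 = P.[a].
Proof. by rewrite -horner_coef0 horner_comp !hornerE. Qed.

Lemma dvd_local Q R : Q != 0 ->
  (forall (a : F) k, ('X - a%:P) ^+ k %| Q -> ('X - a%:P) ^+ k %| R) -> Q %| R.
Proof.
move: {2}(size Q) (leqnn (size Q)) => n; elim: n Q R => [|n IH] Q R.
  by rewrite size_poly_leq0 => /eqP -> /eqP.
move=> hs hQ hloc.
case: (boolP (size Q == 1%N)) => hs1.
  by move/size_poly1P: hs1 => [c hc ->]; rewrite -[c%:P]mulr1 mul_polyC dvdpZl // dvd1p.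
have [a ha] := closed_rootP Q hs1.
move/factor_theorem: ha => [Q' eQ].
have hQ' : Q' != 0 by move: hQ; rewrite eQ mulf_eq0 negb_or => /andP [].
have hR : ('X - a%:P) %| R by have := hloc a 1%N; rewrite !expr1 eQ dvdp_mull // => /(_ isT).
move/dvdpP: hR => [R' eR].
rewrite eQ eR dvdp_mul2r ?polyXsubC_eq0 //.
apply: IH => //.
  have hsz : size Q = (size Q').+1 by rewrite eQ size_mul ?polyXsubC_eq0 // size_XsubC addn2.
  by move: hs; rewrite hsz.
move=> b k; case: (eqVneq b a) => [->|hab] hk.
  have := hloc a k.+1; rewrite eQ eR exprSr !dvdp_mul2r ?polyXsubC_eq0 //.
  by move=> /(_ hk).
have hk2 : ('X - b%:P) ^+ k %| R by apply: hloc; rewrite eQ dvdp_mulr.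
move: hk2; rewrite eR Gauss_dvdpl //.
apply: coprimep_expl; apply: coprimep_XsubC2; by rewrite subr_eq0 eq_sym.
Qed.

End P5.

Section P6.
Variable F : numClosedFieldType.
Implicit Types P Q R : {poly F}.
Implicit Types u v : ser F.

Lemma smulCl (c : F) u n : smul (coefs c%:P) u n = c * u n.
Proof.
rewrite /smul big_ord_recl /= subn0 /coefs coefC eqxx big1 ?addr0 // => i _.
by rewrite coefC /= mul0r.
Qed.

Lemma smulCr (c : F) u n : smul u (coefs c%:P) n = u n * c.
Proof. by rewrite smulC smulCl mulrC. Qed.

Definition shift1 u : ser F := fun n => if (n < 1)%N then 0 else u (n - 1)%N.

Lemma RR_num_aff f q P0 P1 Q (a b : F) : b != 0 ->
  RR 0 (sadd (coefs (P0 \Po ('X + a%:P)))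
             (smul (coefs (P1 \Po ('X + a%:P))) (sqs (coefs (f \Po ('X + a%:P))) b)))
     (qnum f q (RF P0 P1 Q) (Aff a b)).
Proof.
move=> hb; rewrite /qnum /= hb /=.
have hX : RR 0 (coefs ('X + a%:P)) (LS 0 (coefs (a%:P + 'X))) by rewrite addrC; apply: RR_LS.
have hY : RR 0 (sqs (coefs (f \Po ('X + a%:P))) b) (LS 0 (sqs (coefs (f \Po ('X + a%:P))) b)).
  exact: RR_LS.
have h0 := RR_leval0 P0 hX; have h1 := RR_leval0 P1 hX.
have hs := RR_add h0 (RR_shift (addr0 0) (RR_mul h1 hY)).
have hp := RR_powP q (RR_const (1 : F)).
apply: RR_ext (RR_shift _ (RR_mul hs hp)) _; first by rewrite mul0r addr0.
by move=> n; rewrite expr1n smulCr mulr1.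
Qed.

Lemma RR_den_aff (h : rfun F) (a b : F) : b != 0 ->
  RR 0 (coefs (rQ h \Po ('X + a%:P))) (qden h (Aff a b)).
Proof.
move=> hb; rewrite /qden /= hb.
have hX : RR 0 (coefs ('X + a%:P)) (LS 0 (coefs (a%:P + 'X))) by rewrite addrC; apply: RR_LS.
exact: RR_leval0.
Qed.

Lemma RR_num_br f q P0 P1 Q (a : F) :
  RR q%:Z (smul (sadd (coefs (P0 \Po (a%:P + 'X ^+ 2)))
     (shift1 (smul (coefs (P1 \Po (a%:P + 'X ^+ 2)))
       (sqs (fun n => if odd n then 0 else ((f %/ ('X - a%:P)) \Po ('X + a%:P))`_n./2)
            (sqrtC (f %/ ('X - a%:P)).[a])))))
     (coefs ((2%:P) ^+ q)))
   (qnum f q (RF P0 P1 Q) (Aff a 0)).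
Proof.
rewrite /qnum /= eqxx /=.
have hX : RR 0 (coefs (a%:P + 'X ^+ 2)) (LS 0 (coefs (a%:P + 'X ^+ 2))) by apply: RR_LS.
set S := sqs _ _.
have hY : RR 1 S (LS 1 S) by apply: RR_LS.
have h0 := RR_leval0 P0 hX; have h1 := RR_leval0 P1 hX.
have h1Y := RR_low 1 (RR_mul h1 hY).
have hs := RR_add h0 (RR_shift _ h1Y).
have hd : RR 1 (coefs 2%:P) (LS 1 (coefs (2%:P : {poly F}))) by apply: RR_LS.
have hp := RR_powP q hd.
apply: RR_shift (RR_mul (hs _) hp); lia.
Qed.

Lemma RR_den_br (h : rfun F) (a : F) :
  RR 0 (coefs (rQ h \Po (a%:P + 'X ^+ 2))) (qden h (Aff a 0)).
Proof.
rewrite /qden /= eqxx /=.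
have hX : RR 0 (coefs (a%:P + 'X ^+ 2)) (LS 0 (coefs (a%:P + 'X ^+ 2))) by apply: RR_LS.
exact: RR_leval0.
Qed.

Definition ginf (f : {poly F}) : ser F := fun n => if (n <= 8)%N then f`_(8 - n) else 0.

Lemma RR_num_inf f q P0 P1 Q (c : F) D : (size P0 <= D.+1)%N -> (size P1 <= D.+1)%N ->
  RR (- D%:Z - 4 + (-2) * q%:Z)
    (smul (sadd (coefs ('X^4 * revD D P0)) (smul (coefs (revD D P1)) (sqs (ginf f) c)))
          (coefs ((-1) ^+ q)))
    (qnum f q (RF P0 P1 Q) (Inf c)).
Proof.
move=> h0s h1s; rewrite /qnum /=.
have h0 := RR_lowP 4 (RR_leval_inf h0s).
have h1 := RR_leval_inf h1s.
have hY : RR (-4) (sqs (ginf f) c) (LS (-4) (sqs (ginf f) c)) by apply: RR_LS.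
have hs := RR_add h0 (RR_shift _ (RR_mul h1 hY)).
have hd : RR (-2) (coefs (-1)) (LS (-2) (coefs (-1 : {poly F}))) by apply: RR_LS.
have hp := RR_powP q hd.
exact: RR_mul (hs _) hp.
Qed.

Lemma RR_den_inf (h : rfun F) (c : F) D : (size (rQ h) <= D.+1)%N ->
  RR (- D%:Z) (coefs (revD D (rQ h))) (qden h (Inf c)).
Proof. by move=> hs; rewrite /qden /=; apply: RR_leval_inf. Qed.

End P6.

Section P7.
Variable F : numClosedFieldType.
Implicit Types P Q R : {poly F}.
Implicit Types u v : ser F.

Lemma holo_use f q (h : rfun F) (P : hpoint F) (s : int) u (s' : int) v (k' : nat) : holo_qdiff f q h -> on_curve f P ->
  RR s u (qnum f q h P) -> RR s' v (qden h P) -> sord v k' ->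
  forall n : nat, s + n%:Z < s' + k'%:Z -> u n = 0.
Proof.
move=> [_ hh] hP hu hv hk n hn; apply/eqP/negPn/negP => hne.
have [k [hkn hk0]] := exists_sord hne.
have := hh P hP ((s + k%:Z) - (s' + k'%:Z)).
have : qord f q h P ((s + k%:Z) - (s' + k'%:Z)).
  by exists (s + k%:Z), (s' + k'%:Z); split => //; [exact: RR_lorder hu hk0 | exact: RR_lorder hv hk].
move=> hq /(_ hq); lia.
Qed.

Lemma coef_revD D P j : (size P <= D.+1)%N ->
  (revD D P)`_j = if (j <= D)%N && (D - j < size P)%N then P`_(D - j) else 0.
Proof.
move=> hs; rewrite /revD coef_sum.
under eq_bigr do rewrite coefZ coefXn.
case: ifP => [/andP [hj hd]|hn].
  rewrite (bigD1 (Ordinal hd)) //= subKn // eqxx mulr1 big1 ?addr0 // => i /eqP hi.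
  case: eqP => [e|]; last by rewrite mulr0.
  exfalso; apply: hi; apply: val_inj => /=; have := ltn_ord i; move: e.
  have gen : forall x : nat, j = (D - x)%N -> (x < size P)%N -> x = (D - j)%N by move=> x; lia.
  exact: gen.
rewrite big1 // => i _; case: eqP => [e|]; last by rewrite mulr0.
exfalso; move: hn; have := ltn_ord i; move: e.
have gen : forall x : nat, j = (D - x)%N -> (x < size P)%N -> ((j <= D)%N && (D - j < size P)%N) = false -> False.
  by move=> x; lia.
exact: gen.
Qed.

Lemma revD_sV D P : (size P <= D.+1)%N -> sV (D.+1 - size P) (coefs (revD D P)).
Proof. move=> hs n hn; rewrite /coefs coef_revD // ifN //; apply/negP; lia. Qed.

Lemma revD_sord D P : (size P <= D.+1)%N -> P != 0 -> sord (coefs (revD D P)) (D.+1 - size P).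
Proof.
move=> hs hP; split; last exact: revD_sV.
have hs0 : (0 < size P)%N by rewrite size_poly_gt0.
rewrite /coefs coef_revD // ifT; last by apply/andP; split; lia.
have -> : (D - (D.+1 - size P) = (size P).-1)%N by lia.
by rewrite -lead_coefE lead_coef_eq0.
Qed.

Lemma even_mul u v : (forall i, odd i -> u i = 0) -> (forall i, odd i -> v i = 0) ->
  forall m, odd m -> smul u v m = 0.
Proof.
move=> hu hv m hm; rewrite /smul big1 // => i _.
case: (boolP (odd i)) => hi; first by rewrite hu ?mul0r.
rewrite hv ?mulr0 //; have := ltn_ord i; rewrite ltnS => hle.
by rewrite oddB // hm (negbTE hi).
Qed.

Lemma comp_nonzero P (a : F) : P != 0 -> P \Po ('X + a%:P) != 0.
Proof.
move=> hP; apply/negP => /eqP e; move: hP.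
by rewrite -(comp_polyXaddC_K P a) e comp_poly0 eqxx.
Qed.

Lemma poly_sord P : P != 0 -> exists k, sord (coefs P) k.
Proof.
move=> hP; have : (coefs P) (size P).-1 != 0 by rewrite /coefs -lead_coefE lead_coef_eq0.
by case/exists_sord => k [_ hk]; exists k.
Qed.

End P7.

Section P8.
Variable F : numClosedFieldType.
Implicit Types P Q R : {poly F}.
Implicit Types u v : ser F.

Lemma two_eq0 (x y : F) : x + y = 0 -> x - y = 0 -> x = 0 /\ y = 0.
Proof.
move=> h1 h2.
have hx : x *+ 2 = (x + y) + (x - y) by rewrite mulr2n; ring.
rewrite h1 h2 addr0 in hx.
move/eqP: hx; rewrite mulrn_eq0 /= => /eqP hx; split => //.
by move: h1; rewrite hx add0r.
Qed.

Lemma loc_nonbranch f P0 P1 Q (a : F) k : holo_qdiff f 2 (RF P0 P1 Q) -> Q != 0 ->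
  f.[a] != 0 ->
  ('X - a%:P) ^+ k %| Q -> ('X - a%:P) ^+ k %| P0 /\ ('X - a%:P) ^+ k %| P1.
Proof.
move=> hh hQ hfa hk.
set b := sqrtC f.[a].
have hb : b != 0 by rewrite sqrtC_eq0.
have hP1 : on_curve f (Aff a b) by rewrite /= sqrtCK.
have hP2 : on_curve f (Aff a (- b)) by rewrite /= sqrrN sqrtCK.
have hb' : - b != 0 by rewrite oppr_eq0.
have [kq hkq] := poly_sord (comp_nonzero a hQ).
have hkk : (k <= kq)%N.
  rewrite leqNgt; apply/negP => hlt; case: hkq => hne _; move: hne.
  by rewrite /coefs (proj1 (dvd_sV2 _ _ _) hk) ?eqxx.
have u1 := holo_use hh hP1 (RR_num_aff f 2 P0 P1 Q a hb) (RR_den_aff (RF P0 P1 Q) a hb) hkq.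
have u2 := holo_use hh hP2 (RR_num_aff f 2 P0 P1 Q a hb') (RR_den_aff (RF P0 P1 Q) a hb') hkq.
set A0 := coefs (P0 \Po ('X + a%:P)) in u1 u2.
set A1 := coefs (P1 \Po ('X + a%:P)) in u1 u2.
set g := coefs (f \Po ('X + a%:P)) in u1 u2.
have e0 : forall n, (n < k)%N -> A0 n = 0 /\ smul A1 (sqs g b) n = 0.
  move=> n hn; apply: two_eq0.
    by have := u1 n; rewrite /sadd => -> //; lia.
  have := u2 n; rewrite /sadd => <-; last by lia.
  congr (_ + _).
  rewrite (@smul_ext _ A1 A1 (sqs g (- b)) (sopp (sqs g b))) => [|//|i _]; last by rewrite sqs_opp.
  by rewrite [RHS]smulC smulNl smulC.
split; apply/dvd_sV2.
  by move=> i hi; case: (e0 i hi).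
apply: (@sV_unit _ _ (sqs g b)); last by rewrite sqs0.
by move=> i hi; case: (e0 i hi).
Qed.

End P8.

Section P9.
Variable F : numClosedFieldType.
Implicit Types P Q R : {poly F}.
Implicit Types u v : ser F.

Lemma coef_br P (a : F) i :
  (P \Po (a%:P + 'X ^+ 2))`_i = if odd i then 0 else (P \Po ('X + a%:P))`_(i./2).
Proof.
have -> : P \Po (a%:P + 'X ^+ 2) = (P \Po ('X + a%:P)) \Po 'X^2.
  by rewrite -comp_polyA comp_polyD comp_polyX comp_polyC addrC.
by rewrite coef_comp_poly_Xn // dvdn2 divn2; case: (odd i).
Qed.

Lemma sep_root_h f (a : F) : separable_poly f -> f.[a] = 0 -> (f %/ ('X - a%:P)).[a] != 0.
Proof.
move=> hs hfa.
have hd : ('X - a%:P) %| f by rewrite -root_factor_theorem /root hfa.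
move: hs; rewrite -{1}(divpK hd) separable_root => /andP [_].
by rewrite /root.
Qed.

Lemma loc_branch f P0 P1 Q (a : F) k : separable_poly f ->
  holo_qdiff f 2 (RF P0 P1 Q) -> Q != 0 -> f.[a] = 0 ->
  ('X - a%:P) ^+ k.+1 %| Q -> ('X - a%:P) ^+ k %| P0 /\ ('X - a%:P) ^+ k %| P1.
Proof.
move=> hs hh hQ hfa hk.
have hP : on_curve f (Aff a 0) by rewrite /= hfa expr0n.
set Q' := Q \Po ('X + a%:P).
have hQ' : Q' != 0 by apply: comp_nonzero.
have hk' := proj1 (dvd_sV2 _ _ _) hk.
have hc : coefs (Q \Po (a%:P + 'X ^+ 2)) ((size Q').-1).*2 != 0.
  by rewrite /coefs coef_br odd_double doubleK -/Q' -lead_coefE lead_coef_eq0.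
have [kq [_ hkq]] := exists_sord hc.
have hkk : (k.+1.*2 <= kq)%N.
  rewrite leqNgt; apply/negP => hlt; case: hkq => hne _; move: hne.
  rewrite /coefs coef_br; case: ifP => [_|ho]; first by rewrite eqxx.
  by rewrite hk' ?eqxx //; move: hlt ho; rewrite -!divn2; lia.
have u := holo_use hh hP (RR_num_br f 2 P0 P1 Q a) (RR_den_br (RF P0 P1 Q) a) hkq.
set E := coefs (P0 \Po (a%:P + 'X ^+ 2)) in u.
set O := coefs (P1 \Po (a%:P + 'X ^+ 2)) in u.
set S := sqs _ _ in u.
have h2 : (2 * 2 : F) != 0 by rewrite mulf_neq0 // pnatr_eq0.
have W : forall n, (n < k.*2)%N -> sadd E (shift1 (smul O S)) n = 0.
  move=> n hn.
  have hlt : (2 : int) + n%:Z < 0 + kq%:Z by move: hkk hn; rewrite -!muln2; lia.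
  have := u n hlt; rewrite expr2 -polyCM smulCr => /eqP.
  by rewrite mulf_eq0 (negbTE h2) orbF => /eqP.
have Eodd : forall i, odd i -> E i = 0 by move=> i hi; rewrite /E /coefs coef_br hi.
have Oodd : forall i, odd i -> O i = 0 by move=> i hi; rewrite /O /coefs coef_br hi.
have Sodd : forall i, odd i -> S i = 0.
  by move=> i hi; apply: sqs_odd => // j ->.
have OSodd := even_mul Oodd Sodd.
have hS0 : S 0%N != 0.
  by rewrite /S sqs0 sqrtC_eq0; apply: sep_root_h.
split; apply/dvd_sV2 => j hj.
  have := W j.*2; rewrite /sadd /shift1 /E /coefs coef_br odd_double doubleK.
  case: ifP => [_|hj0]; first by rewrite addr0 => ->; rewrite // -!muln2; lia.
  rewrite OSodd ?addr0; first by move=> -> //; rewrite -!muln2; lia.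
  by move: hj0; case: j {hj} => // j _; rewrite doubleS subn1 /= odd_double.
have hOS : sV k.*2 (smul O S).
  move=> i hi; case: (boolP (odd i)) => ho; first exact: OSodd.
  have := W i.+1; rewrite /sadd /shift1 Eodd /=; last by rewrite ho.
  rewrite add0r subn1 /= => -> //.
  have ei := odd_double_half i; rewrite (negbTE ho) add0n in ei.
  move: hi; rewrite -ei -!muln2; lia.
have hj2 : (j.*2 < k.*2)%N by rewrite ltn_double.
have := sV_unit hOS hS0 hj2.
by rewrite /O /coefs coef_br odd_double doubleK.
Qed.

End P9.

Section P10.
Variable F : numClosedFieldType.
Implicit Types f P Q R : {poly F}.
Implicit Types u v : ser F.

Lemma loc_inf f P0 P1 Q : size f = 9%N -> holo_qdiff f 2 (RF P0 P1 Q) -> Q != 0 ->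
  (P0 != 0 -> (size P0 + 4 <= size Q)%N) /\ (P1 != 0 -> (size P1 + 8 <= size Q)%N).
Proof.
move=> hf hh hQ.
have hf0 : f != 0 by rewrite -size_poly_gt0 hf.
set c := sqrtC (lead_coef f).
have hc : c != 0 by rewrite sqrtC_eq0 lead_coef_eq0.
have hc' : - c != 0 by rewrite oppr_eq0.
have hP1 : on_curve f (Inf c) by rewrite /= sqrtCK.
have hP2 : on_curve f (Inf (- c)) by rewrite /= sqrrN sqrtCK.
set D := (size P0 + size P1 + size Q)%N.
have hs0 : (size P0 <= D.+1)%N by rewrite /D; lia.
have hs1 : (size P1 <= D.+1)%N by rewrite /D; lia.
have hsq : (size Q <= D.+1)%N by rewrite /D; lia.
have hkq := revD_sord hsq hQ.
have u1 := holo_use hh hP1 (RR_num_inf f 2 Q c hs0 hs1) (@RR_den_inf _ (RF P0 P1 Q) c _ hsq) hkq.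
have u2 := holo_use hh hP2 (RR_num_inf f 2 Q (- c) hs0 hs1) (@RR_den_inf _ (RF P0 P1 Q) (- c) _ hsq) hkq.
set X4 := coefs ('X^4 * revD D P0) in u1 u2.
set R1 := coefs (revD D P1) in u1 u2.
set S := sqs (ginf f) c in u1.
set M := (D.+1 - size Q + 8)%N.
have e0 : forall n, (n < M)%N -> X4 n = 0 /\ smul R1 S n = 0.
  move=> n hn.
  have hlt : - D%:Z - 4 + (-2) * 2%:Z + n%:Z < - D%:Z + (D.+1 - size Q)%N%:Z by rewrite /M in hn; lia.
  apply: two_eq0.
    by have := u1 _ hlt; rewrite sqrrN expr1n -polyC1 smulCr mulr1.
  have := u2 _ hlt; rewrite sqrrN expr1n -polyC1 smulCr mulr1 /sadd => <-.
  congr (_ + _).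
  rewrite (@smul_ext _ R1 R1 (sqs (ginf f) (- c)) (sopp S)) => [|//|i _]; last by rewrite sqs_opp.
  by rewrite [RHS]smulC smulNl smulC.
have hR1 : sV M R1.
  apply: (@sV_unit _ _ S); last by rewrite /S sqs0.
  by move=> i hi; case: (e0 i hi).
split => hP.
  have [hne _] := revD_sord hs0 hP.
  have : X4 (4 + (D.+1 - size P0))%N != 0 by rewrite /X4 /coefs coefXnM /= addKn.
  apply: contraR; rewrite -ltnNge => hlt.
  have hlt' : (4 + (D.+1 - size P0) < M)%N by rewrite /M; lia.
  by case: (e0 _ hlt') => ->.
have [hne _] := revD_sord hs1 hP.
rewrite leqNgt; apply/negP => hlt.
have : (D.+1 - size P1 < M)%N by rewrite /M; lia.
by move/hR1; rewrite /R1 => e; rewrite e eqxx in hne.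
Qed.

End P10.

Section P11.
Variable F : numClosedFieldType.
Implicit Types f P Q R : {poly F}.
Implicit Types u v : ser F.

Lemma dvd_Pf f P0 P1 Q : separable_poly f -> holo_qdiff f 2 (RF P0 P1 Q) -> Q != 0 ->
  Q %| P0 * f /\ Q %| P1 * f.
Proof.
move=> hs hh hQ.
have key : forall (a : F) k, ('X - a%:P) ^+ k %| Q ->
    ('X - a%:P) ^+ k %| P0 * f /\ ('X - a%:P) ^+ k %| P1 * f.
  move=> a k hk; case: (eqVneq f.[a] 0) => hfa.
    case: k hk => [|k] hk; first by rewrite expr0 !dvd1p.
    have [h0 h1] := loc_branch hs hh hQ hfa hk.
    have hd : ('X - a%:P) %| f by rewrite -root_factor_theorem /root hfa.
    by rewrite exprSr; split; apply: dvdp_mul.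
  have [h0 h1] := loc_nonbranch hh hQ hfa hk.
  by split; apply: dvdp_mulr.
split; apply: dvd_local => // a k hk; by case: (key a k hk).
Qed.

Lemma global_form f P0 P1 Q : size f = 9%N -> separable_poly f ->
  holo_qdiff f 2 (RF P0 P1 Q) -> Q != 0 ->
  exists p r, [/\ P0 * f = Q * p, P1 * f = Q * r, (size p <= 5)%N & (size r <= 1)%N].
Proof.
move=> hf hs hh hQ.
have hf0 : f != 0 by rewrite -size_poly_gt0 hf.
have [d0 d1] := dvd_Pf hs hh hQ.
have [i0 i1] := loc_inf hf hh hQ.
have gen : forall P m, Q %| P * f -> (P != 0 -> (size P + m <= size Q)%N) ->
    exists p, P * f = Q * p /\ (size p <= 9 - m)%N.
  move=> P m hd hsz; exists ((P * f) %/ Q); split; first by rewrite [Q * _]mulrC divpK.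
  case: (eqVneq P 0) => [->|hP]; first by rewrite mul0r div0p size_poly0.
  set p := (P * f) %/ Q.
  have hp : P * f = p * Q by rewrite divpK.
  have hp0 : p != 0 by apply/negP => /eqP e; move: hp; rewrite e mul0r => /eqP; rewrite mulf_eq0 (negbTE hP) (negbTE hf0).
  have := congr1 (fun x : {poly F} => size x) hp; rewrite /= !size_mul // hf.
  have := hsz hP; have := size_poly_gt0 P; have := size_poly_gt0 Q; rewrite hP hQ.
  have gen2 : forall x y z : nat, (0 < z)%N -> (0 < y)%N -> (y + m <= z)%N -> (y + 9).-1 = (x + z).-1 -> (x <= 9 - m)%N by move=> *; lia.
  exact: gen2.
have [p [hp hps]] := gen _ _ d0 i0.
have [r [hr hrs]] := gen _ _ d1 i1.
by exists p, r; split.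
Qed.

End P11.

Section P12.
Variable F : numClosedFieldType.
Implicit Types f P Q R : {poly F}.
Implicit Types u v : ser F.

Lemma qord_ge f q (h : rfun F) (P : hpoint F) (s : int) u (s' : int) v (k' m : nat) (z : int) :
  RR s u (qnum f q h P) -> RR s' v (qden h P) ->
  sord v k' -> sV m u -> s' + k'%:Z <= s + m%:Z -> qord f q h P z -> 0 <= z.
Proof.
move=> hu hv hk hm hle [zn [zd [hzn hzd ->]]].
have [kn [-> hkn]] := RR_lorder_inv hu hzn.
have -> : zd = s' + k'%:Z by apply: lorder_uniq hzd (RR_lorder hv hk).
have : (m <= kn)%N.
  by rewrite leqNgt; apply/negP => hlt; case: hkn => hne _; move: hne; rewrite hm // eqxx.
lia.
Qed.

Lemma qord_eq f q (h : rfun F) (P : hpoint F) (s : int) u (s' : int) v (k k' : nat) (z : int) :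
  RR s u (qnum f q h P) -> RR s' v (qden h P) ->
  sord u k -> sord v k' -> qord f q h P z -> z = (s + k%:Z) - (s' + k'%:Z).
Proof.
move=> hu hv hk hk' [zn [zd [hzn hzd ->]]].
by rewrite (lorder_uniq hzn (RR_lorder hu hk)) (lorder_uniq hzd (RR_lorder hv hk')).
Qed.

Lemma qord_mk f q (h : rfun F) (P : hpoint F) (s : int) u (s' : int) v (k k' : nat) :
  RR s u (qnum f q h P) -> RR s' v (qden h P) ->
  sord u k -> sord v k' -> qord f q h P ((s + k%:Z) - (s' + k'%:Z)).
Proof.
move=> hu hv hk hk'; exists (s + k%:Z), (s' + k'%:Z); split => //.
  exact: RR_lorder hu hk.
exact: RR_lorder hv hk'.
Qed.

Lemma sV0 u : sV 0 u.
Proof. by []. Qed.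

Lemma holo_std f (p r : {poly F}) : size f = 9%N -> separable_poly f -> (size p <= 5)%N -> (size r <= 1)%N ->
  holo_qdiff f 2 (RF p r f).
Proof.
move=> hf hs hp hr.
have hf0 : f != 0 by rewrite -size_poly_gt0 hf.
split => // -[a b' | c] hP z.
  case: (eqVneq b' 0) => [eb | hb].
    subst b'; move: hP; rewrite /= expr0n /= => /esym hfa.
    have hd : ('X - a%:P) %| f by rewrite -root_factor_theorem /root hfa.
    set h := f %/ ('X - a%:P).
    have hh : h.[a] != 0 by apply: sep_root_h.
    have e : f \Po ('X + a%:P) = (h \Po ('X + a%:P)) * 'X.
      by rewrite -{1}(divpK hd) comp_polyM XsubC_shift.
    have hk : sord (coefs (rQ (RF p r f) \Po (a%:P + 'X ^+ 2))) 2.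
      split; first by rewrite /coefs coef_br /= e coefMX /= coef0_shift.
      move=> n hn; rewrite /coefs coef_br; case: n hn => [|[|]] // _ /=.
      by rewrite coef0_shift hfa.
    by apply: (qord_ge (RR_num_br f 2 p r f a) (RR_den_br _ a) hk (@sV0 _)); lia.
  have hfa : f.[a] != 0 by move: hP; rewrite /= => <-; rewrite expf_neq0.
  have hk : sord (coefs (rQ (RF p r f) \Po ('X + a%:P))) 0.
    by split => //; rewrite /coefs coef0_shift.
  by apply: (qord_ge (RR_num_aff f 2 p r f a hb) (RR_den_aff _ a hb) hk (@sV0 _)); lia.
have hs0 : (size p <= 9)%N by lia.
have hs1 : (size r <= 9)%N by lia.
have hsf : (size f <= 9)%N by rewrite hf.
have hk := revD_sord hsf hf0; rewrite hf subnn in hk.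
apply: (qord_ge (RR_num_inf f 2 f c hs0 hs1) (@RR_den_inf _ (RF p r f) c 8 hsf) hk (m := 8)); last by lia.
move=> n hn; rewrite sqrrN expr1n -polyC1 smulCr mulr1 /sadd.
have h1 : smul (coefs (revD 8 r)) (sqs (ginf f) c) n = 0.
  apply: (sV_mul (k := (9 - size r)%N) (m := 0)); first exact: revD_sV.
    by [].
  lia.
rewrite h1 addr0 /coefs coefXnM; case: ifP => // hn4.
have hv := revD_sV hs0; rewrite /sV /coefs in hv.
rewrite hv //; lia.
Qed.

End P12.

Section P13.
Variable F : numClosedFieldType.
Variables (f : {poly F}) (w b : F).
Hypothesis hf : size f = 9%N.
Hypothesis hs : separable_poly f.
Hypothesis hfw : f.[w] != 0.
Hypothesis hb2 : b ^+ 2 = f.[w].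

Let Y := sqs (coefs (f \Po ('X + w%:P))) b.
Let T4W : {poly F} := \poly_(i < 5) Y i.
Definition Yd : ser F := fun n => Y n - T4W`_n.

Lemma hb0 : b != 0.
Proof. by apply/negP => /eqP e; move: hfw; rewrite -hb2 e expr0n /= eqxx. Qed.

Lemma taylor4E : taylor4 f w b = T4W \Po ('X - w%:P).
Proof.
rewrite /taylor4 /T4W poly_def raddf_sum; apply: eq_bigr => i _ /=.
by rewrite comp_polyZ comp_Xn_poly.
Qed.

Lemma T4W_shift : taylor4 f w b \Po ('X + w%:P) = T4W.
Proof. by rewrite taylor4E -comp_polyA XsubC_shift comp_polyXr. Qed.

Lemma size_T4W : (size T4W <= 5)%N.
Proof. exact: size_poly. Qed.

Lemma size_taylor4 : (size (taylor4 f w b) <= 5)%N.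
Proof. by rewrite taylor4E size_comp_poly2 ?size_XsubC // size_T4W. Qed.

Lemma coef_T4W n : T4W`_n = if (n < 5)%N then Y n else 0.
Proof. by rewrite coef_poly. Qed.

Lemma Yd_low n : (n < 5)%N -> Yd n = 0.
Proof. by move=> h; rewrite /Yd coef_T4W h subrr. Qed.

Lemma Y_split n : Y n = T4W`_n + Yd n.
Proof. by rewrite /Yd addrC subrK. Qed.

Lemma RR_Yd q (Q : {poly F}) :
  RR 0 Yd (qnum f q (RF (- taylor4 f w b) 1 Q) (Aff w b)).
Proof.
apply: RR_ext (RR_num_aff f q (- taylor4 f w b) 1 Q w hb0) _ => n.
rewrite /sadd -polyC1 comp_polyC smulCl mul1r -sub0r comp_polyB comp_poly0 sub0r T4W_shift.
by rewrite /coefs coefN addrC /Yd -/Y.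
Qed.

Lemma Yd_nonzero : exists n, Yd n != 0.
Proof.
apply: NNPP => hall.
have hY : forall n, Y n = T4W`_n.
  move=> n; rewrite Y_split; have : ~ (Yd n != 0) by move=> h; apply: hall; exists n.
  by move/negP; rewrite negbK => /eqP ->; rewrite addr0.
have e : T4W ^+ 2 = f \Po ('X + w%:P).
  apply/polyP => n; rewrite expr2.
  have <- : smul Y Y n = (T4W * T4W)`_n by apply: smul_poly => i _; rewrite hY.
  rewrite sqs_sq //; last exact: hb0.
  by rewrite /coefs coef0_shift hb2.
have e2 : taylor4 f w b ^+ 2 = f.
  by rewrite taylor4E -comp_exp e comp_polyXaddC_K.
have hns := separable_nosquare (u := taylor4 f w b) (k := 2) hs (isT : (1 < 2)%N).
case: (eqVneq (size (taylor4 f w b)) 1%N) => [h1|h1]; last by have := hns h1; rewrite e2 dvdpp.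
move/eqP/size_poly1P: h1 => [c _ ec].
move: hf; rewrite -e2 ec expr2 -polyCM size_polyC; by case: (_ != 0).
Qed.

End P13.

Section P14.
Variable F : numClosedFieldType.
Variables (f : {poly F}) (w b : F).
Hypothesis hf : size f = 9%N.
Hypothesis hs : separable_poly f.
Hypothesis hfw : f.[w] != 0.
Hypothesis hb2 : b ^+ 2 = f.[w].

Lemma sord_ext (u v : ser F) k : (forall n, u n = v n) -> sord u k -> sord v k.
Proof. by move=> e [h1 h2]; split; [rewrite -e | move=> n hn; rewrite -e h2]. Qed.

Lemma smul_swap (u v c : ser F) m : smul (smul u v) c m = smul (smul u c) v m.
Proof.
rewrite smulA (@smul_ext _ u u (smul v c) (smul c v)) //; first by rewrite -smulA.
by move=> i _; rewrite smulC.
Qed.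

Lemma gap_forward k6 : sord (Yd f w b) k6 -> forall n, in_qgap f 2 (Aff w b) n ->
  (0 < n)%N /\ ((n <= 5)%N \/ n = k6.+1).
Proof.
move=> hk6 n [[P0 P1 Q] [[hQ _] hh hq]] /=; rewrite /= in hQ.
have [p [r [e0 e1 hp hr]]] := global_form hf hs hh hQ.
have hb := hb0 hfw hb2.
set S := 'X + w%:P.
set Y := sqs (coefs (f \Po S)) b.
have hnum := RR_num_aff f 2 P0 P1 Q w hb.
have hden := RR_den_aff (RF P0 P1 Q) w hb.
case: hq => [zn [zd [hzn hzd hz]]].
have [kn [ezn hkn]] := RR_lorder_inv hnum hzn.
have [kd [ezd hkd]] := RR_lorder_inv hden hzd.
rewrite /= -/S -/Y in hkn hkd.
set V := sadd (coefs (p \Po S)) (smul (coefs (r \Po S)) Y).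
have iden : forall m, smul (sadd (coefs (P0 \Po S)) (smul (coefs (P1 \Po S)) Y)) (coefs (f \Po S)) m
    = smul (coefs (Q \Po S)) V m.
  move=> m; rewrite smulDl smul_coefs [RHS]smulC /V smulDl smul_coefs.
  rewrite -!comp_polyM e0 [p * Q]mulrC; congr (_ + _).
  rewrite smul_swap [RHS]smul_swap.
  rewrite (@smul_ext _ _ (coefs ((P1 * f) \Po S)) _ Y) => [|i _|//]; last by rewrite smul_coefs comp_polyM.
  rewrite [RHS](@smul_ext _ _ (coefs ((r * Q) \Po S)) _ Y) => [|i _|//]; last by rewrite smul_coefs comp_polyM.
  by rewrite e1 mulrC.
have hF : sord (coefs (f \Po S)) 0 by split => //; rewrite /coefs coef0_shift.
have hV' : sord (smul (coefs (Q \Po S)) V) kn.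
  by apply: sord_ext iden _; have := sord_mul hkn hF; rewrite addn0.
have [i hi] : exists i, V i != 0.
  apply: NNPP => hall; case: hV' => hne _; move: hne; rewrite /smul big1 ?eqxx // => j _.
  have : ~ (V (kn - j)%N != 0) by move=> h; apply: hall; exists (kn - j)%N.
  by move/negP; rewrite negbK => /eqP ->; rewrite mulr0.
have [kv [_ hkv]] := exists_sord hi.
have ekn := sord_uniq hV' (sord_mul hkd hkv).
have en : n = kv.+1 by move: hz; rewrite ezn ezd ekn; lia.
rewrite en; split => //.
set rc := r`_0; have erc := size1_polyC hr; rewrite -/rc in erc.
have erW : r \Po S = rc%:P by rewrite erc comp_polyC.
have hVi : forall i, V i = (p \Po S)`_i + rc * Y i.
  by move=> j; rewrite /V /sadd erW smulCl.
have hpS : (size (p \Po S) <= 5)%N by rewrite size_comp_poly2 ?size_XaddC.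
case: (eqVneq rc 0) => [rc0|rcn].
  left; case: hkv => hne _; move: hne; rewrite hVi rc0 mul0r addr0.
  case: (leqP (size (p \Po S)) kv) => hl; first by rewrite nth_default // eqxx.
  move=> _; lia.
set Z := p \Po S + rc *: \poly_(i < 5) Y i.
have hVZ : forall j, V j = Z`_j + rc * Yd f w b j.
  move=> j; rewrite hVi /Z coefD coefZ /Y /S (Y_split f w b j); ring.
case: (eqVneq Z 0) => [Z0|Zn].
  right; congr (_.+1); apply: sord_uniq hkv _.
  apply: (@sord_ext (fun j => rc * Yd f w b j)).
    by move=> j; rewrite hVZ Z0 coef0 add0r.
  case: hk6 => h1 h2; split; first by rewrite mulf_neq0.
  by move=> j hj; rewrite h2 ?mulr0.
left.
have [kz hkz] := poly_sord Zn.
have hsZ : (size Z <= 5)%N.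
  apply: leq_trans (size_add _ _) _; rewrite geq_max hpS /=.
  by apply: leq_trans (size_scale_leq _ _) _; apply: size_poly.
have hkz5 : (kz < 5)%N.
  case: hkz => hne _; apply: leq_trans hsZ; rewrite ltnNge; apply/negP => hl.
  by move: hne; rewrite /coefs nth_default ?eqxx.
have : sord V kz.
  case: hkz => h1 h2; split.
    by rewrite hVZ Yd_low // mulr0 addr0.
  by move=> j hj; rewrite hVZ Yd_low ?mulr0 ?addr0; [apply: h2 | lia].
move/(sord_uniq hkv) => ->; lia.
Qed.

End P14.

Lemma in_gap_small (F : numClosedFieldType) (f : {poly F}) (w b : F) n :
  size f = 9%N -> separable_poly f -> f.[w] != 0 -> b ^+ 2 = f.[w] ->
  (0 < n <= 5)%N -> in_qgap f 2 (Aff w b) n.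
Proof.
move=> hf hs hfw hb2 /andP [hn0 hn5].
have hb := hb0 hfw hb2.
have hf0 : f != 0 by rewrite -size_poly_gt0 hf.
exists (RF (('X - w%:P) ^+ n.-1) 0 f); split.
- split => //; left; by rewrite expf_neq0 // polyXsubC_eq0.
- apply: holo_std => //; last by rewrite size_poly0.
  by rewrite size_exp_XsubC; lia.
- have hk : sord (coefs (rQ (RF (('X - w%:P) ^+ n.-1) 0 f) \Po ('X + w%:P))) 0.
    by split => //; rewrite /coefs coef0_shift.
  have hu : sord (sadd (coefs (('X - w%:P) ^+ n.-1 \Po ('X + w%:P)))
      (smul (coefs (0 \Po ('X + w%:P))) (sqs (coefs (f \Po ('X + w%:P))) b))) n.-1.
    rewrite comp_exp XsubC_shift; split.
      by rewrite /sadd comp_poly0 -polyC0 smulCl mul0r addr0 /coefs coefXn eqxx oner_eq0.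
    move=> i hi; rewrite /sadd comp_poly0 -polyC0 smulCl mul0r addr0 /coefs coefXn.
    by have -> : (i == n.-1) = false by apply/negbTE; rewrite neq_ltn hi.
  have := qord_mk (RR_num_aff f 2 _ 0 f w hb) (RR_den_aff _ w hb) hu hk.
  by have -> : 0 + (n.-1)%:Z - (0 + 0%:Z) = n%:Z - 1 by lia.
Qed.

Lemma in_gap_n6 (F : numClosedFieldType) (f : {poly F}) (w b : F) k6 :
  size f = 9%N -> separable_poly f -> f.[w] != 0 -> b ^+ 2 = f.[w] ->
  sord (Yd f w b) k6 -> in_qgap f 2 (Aff w b) k6.+1.
Proof.
move=> hf hs hfw hb2 hk6.
have hb := hb0 hfw hb2.
have hf0 : f != 0 by rewrite -size_poly_gt0 hf.
exists (RF (- taylor4 f w b) 1 f); split.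
- split => //; right; exact: oner_neq0.
- apply: holo_std => //; last by rewrite size_poly1.
  by rewrite size_opp size_taylor4.
- have hk : sord (coefs (rQ (RF (- taylor4 f w b) 1 f) \Po ('X + w%:P))) 0.
    by split => //; rewrite /coefs coef0_shift.
  have := qord_mk (RR_Yd hfw hb2 2 f) (RR_den_aff _ w hb) hk6 hk.
  by have -> : 0 + k6%:Z - (0 + 0%:Z) = k6.+1%:Z - 1 by lia.
Qed.

Theorem mainTheorem3 (F : numClosedFieldType) (f : {poly F}) (w b : F) :
  size f = 9%N -> separable_poly f ->
  f.[w] != 0 -> b ^+ 2 = f.[w] ->
  exists n6 : nat,
    [/\ qord f 0 (RF (- taylor4 f w b) 1 1) (Aff w b) (n6%:Z - 1),
        (forall n, in_qgap f 2 (Aff w b) n <-> n \in [:: 1; 2; 3; 4; 5; n6]%N)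
      & (6 < n6)%N ->
        forall gs : seq nat, sorted ltn gs ->
          (forall n, in_qgap f 2 (Aff w b) n <-> n \in gs) ->
          (0 < qweight gs)%N /\ qweight gs = (n6 - 6)%N].
Proof.
move=> hf hs hfw hb2.
have hb := hb0 hfw hb2.
have [n0 hn0] := Yd_nonzero hf hs hfw hb2.
have [k6 [_ hk6]] := exists_sord hn0.
have hk65 : (5 <= k6)%N.
  rewrite leqNgt; apply/negP => hl; case: hk6 => hne _; move: hne.
  by rewrite Yd_low // eqxx.
have hiff : forall n, in_qgap f 2 (Aff w b) n <-> n \in [:: 1; 2; 3; 4; 5; k6.+1]%N.
  move=> n; split.
    move=> hq; have [h0 [h1|->]] := gap_forward hf hs hfw hb2 hk6 hq.
      by rewrite !inE; move: h0 h1; case: n {hq} => [|[|[|[|[|[|]]]]]].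
    by rewrite !inE eqxx !orbT.
  rewrite !inE => /orP [/eqP ->|/orP [/eqP ->|/orP [/eqP ->|/orP [/eqP ->|/orP [/eqP ->| /eqP ->]]]]];
    try (apply: in_gap_small => //; done).
  exact: in_gap_n6.
exists k6.+1; split => //.
- have hk1 : sord (coefs (rQ (RF (- taylor4 f w b) 1 1) \Po ('X + w%:P))) 0.
    by split => //; rewrite /coefs coef0_shift hornerE oner_neq0.
  have := qord_mk (RR_Yd hfw hb2 0 1) (RR_den_aff _ w hb) hk6 hk1.
  by have -> : 0 + k6%:Z - (0 + 0%:Z) = k6.+1%:Z - 1 by lia.
- move=> h6 gs hsort hgs.
  have e : gs = [:: 1; 2; 3; 4; 5; k6.+1]%N.
    apply: (irr_sorted_eq ltn_trans ltnn) => //.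
      by rewrite /= ltnS hk65.
    move=> x; apply/idP/idP => hx.
      by apply/(hiff x).1/(hgs x).2.
    by apply/(hgs x).1/(hiff x).2.
  rewrite e /qweight /= !big_ord_recr big_ord0 /=.
  lia.
Qed.
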